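(* With notation as below, the following sequences of group homomorphisms (arising from the long exact cohomology sequences of $0\to Q_\bullet\to\widehat{Y}_\bullet\to\widehat{Y}_\bullet/Q_\bullet\to0$, $Y\in\{A,AA,Q\}$) are exact: $$0\to Q_0\to Q_0\to \widehat{A}_0/Q_0\to Q_1\to Q_1/A_1\to\widehat{A}_1/Q_1\to Q_2\to Q_2/A_2\to\widehat{A}_2/Q_2\to\cdots$$ $$0\to Q_0\to Q_0\to \widehat{AA}_0/Q_0\to Q_1\to Q_1/AA_1\to\widehat{AA}_1/Q_1\to Q_2\to Q_2/AA_2\to\widehat{AA}_2/Q_2\to\cdots$$ $$0\to Q_0\to Q_0\to \widehat{Q}_0/Q_0\to Q_1\to 0\to\widehat{Q}_1/Q_1\to Q_2\to 0\to\cdots$$ Here $H^0(Q_\bullet)=Q_0$, $H^0(\widehat{Y}_\bullet)=Q_0$, $H^n(Q_\bullet)=Q_n$, $H^n(\widehat{A}_\bullet)=Q_n/A_n$, $H^n(\widehat{AA}_\bullet)=Q_n/AA_n$, $H^n(\widehat{Q}_\bullet)=0$ for $n\ge1$, and $H^n(\widehat{Y}_\bullet/Q_\bullet)=\widehat{Y}_n/Q_n\cong Y_{n+1}$ for $n\ge0$. In particular, for every $n\ge1$, $0\to A_n\to Q_n\to Q_n/A_n\to0$ and $0\to AA_n\to Q_n\to Q_n/AA_n\to0$ are exact and $\widehat{Q}_n/Q_n\cong Q_{n+1}$.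
   Context: A po-group is an abelian group with a translation-invariant partial order; $G^+=\{g:0\le g\}$. An atom is a minimal element of $G^+\setminus\{0\}$; $A(G)$ is the subgroup generated by atoms; $AA(G)$ is the subgroup generated by $\{g\in G^+:\exists a\in A(G)\cap G^+,\ g+a\in A(G)\}$; $Q(G)$ is the subgroup generated by $\{g\in G^+:\exists h\in G^+,\ g+h\in A(G)\}$. Quasi-atomic quotient sequence: $G_0=G$, $G_{n+1}=G_n/Q(G_n)$, $\pi_n:G_n\to G_{n+1}$ natural projection. $A_n=A(G_n)$, $AA_n=AA(G_n)$, $Q_n=Q(G_n)$, $\widehat{A}_n=\pi_n^{-1}(A_{n+1})$, $\widehat{AA}_n=\pi_n^{-1}(AA_{n+1})$, $\widehat{Q}_n=\pi_n^{-1}(Q_{n+1})$. Each of $Q_\bullet,\widehat{Y}_\bullet,\widehat{Y}_\bullet/Q_\bullet$ ($Y\in\{A,AA,Q\}$) is a cochain complex, zero in negative degrees, with differentials $\delta_n$ induced by $\pi_n$; the cohomology is $H^n(X_\bullet)=\ker\delta_n/\operatorname{Im}\delta_{n-1}$ (as abelian groups). *)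

(* Defs.v *)
(* Po-groups are modelled as a zmodType G with a Prop-valued
   relation le.  Every group G_n of the quasi-atomic quotient sequence is
   G / K_n for a subgroup K_n of G, and every subgroup (resp. subquotient) of
   G_n is represented by its preimage in G (resp. by the pair of preimages
   "numerator / denominator"). *)
From HB Require Import structures.
From mathcomp Require Import all_boot all_algebra.
Set Implicit Arguments. Unset Strict Implicit. Unset Printing Implicit Defensive.
Import GRing.Theory.
Local Open Scope ring_scope.

Definition subgroupP (G : zmodType) (H : G -> Prop) : Prop :=
  H 0 /\ (forall x y, H x -> H y -> H (x - y)).

Definition gen (G : zmodType) (S : G -> Prop) : G -> Prop :=
  fun g => forall H : G -> Prop, subgroupP H -> (forall x, S x -> H x) -> H g.

(* For a subgroup Kp of G: preimage in G of the positive cone of G/Kp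
   (the quotient is ordered by the image of G^+). *)
Definition posK (G : zmodType) (le : G -> G -> Prop) (Kp : G -> Prop) (g : G) : Prop :=
  exists p k, le 0 p /\ Kp k /\ g = p + k.

(* preimage of the set of atoms of G/Kp: minimal elements of (G/Kp)^+ \ {0} *)
Definition atomK (G : zmodType) (le : G -> G -> Prop) (Kp : G -> Prop) (g : G) : Prop :=
  posK le Kp g /\ ~ Kp g /\
  (forall h, posK le Kp h -> ~ Kp h -> posK le Kp (g - h) -> Kp (g - h)).

Definition AK (G : zmodType) (le : G -> G -> Prop) (Kp : G -> Prop) : G -> Prop :=
  gen (fun g => atomK le Kp g \/ Kp g).

Definition AAK (G : zmodType) (le : G -> G -> Prop) (Kp : G -> Prop) : G -> Prop :=
  gen (fun g => (posK le Kp g /\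
                 exists a, AK le Kp a /\ posK le Kp a /\ AK le Kp (g + a))
                \/ Kp g).

Definition QK (G : zmodType) (le : G -> G -> Prop) (Kp : G -> Prop) : G -> Prop :=
  gen (fun g => (posK le Kp g /\ exists h, posK le Kp h /\ AK le Kp (g + h))
                \/ Kp g).

(* K_n : kernel of G = G_0 -> G_n  (K_0 = 0, K_{n+1} = preimage of Q(G_n)) *)
Fixpoint qker (G : zmodType) (le : G -> G -> Prop) (n : nat) : G -> Prop :=
  match n with
  | 0 => fun g => g = 0
  | m.+1 => QK le (qker le m)
  end.

Inductive Ykind := YA | YAA | YQ.

Definition YK (y : Ykind) (G : zmodType) (le : G -> G -> Prop) (Kp : G -> Prop)
  : G -> Prop :=
  match y with YA => AK le Kp | YAA => AAK le Kp | YQ => QK le Kp end.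

(* preimage in G of Y_n = Y(G_n) ; note Yn YQ le n = qker le n.+1 *)
Definition Yn (y : Ykind) (G : zmodType) (le : G -> G -> Prop) (n : nat) : G -> Prop :=
  YK y le (qker le n).

Record SQ (G : Type) := mkSQ { num : G -> Prop; den : G -> Prop }.

(* the trivial group, as 0/0 and as G/G *)
Definition zeroL (G : zmodType) : SQ G := mkSQ (fun g : G => g = 0) (fun g => g = 0).
Definition zeroR (G : zmodType) : SQ G := mkSQ (fun _ : G => True) (fun _ => True).

Definition sq_eq (G : Type) (S T : SQ G) : Prop :=
  (forall g, num S g <-> num T g) /\ (forall g, den S g <-> den T g).

(* the homomorphism S -> T induced by the identity of G is well defined *)
Definition induced (G : Type) (S T : SQ G) : Prop :=
  (forall g, num S g -> num T g) /\ (forall g, den S g -> den T g).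

(* exactness at T of S -> T -> U (maps induced by the identity of G):
   ker (T -> U) = Im (S -> T) *)
Definition exact_at (G : zmodType) (S T U : SQ G) : Prop :=
  forall g, num T g -> (den U g <-> exists s, num S s /\ den T (g - s)).

(* cohomology of a cochain complex C (zero in negative degrees) whose n-th
   term is the subquotient C n of G and whose differentials are induced by
   the identity of G (i.e. by the projections pi_n) *)
Definition cohom (G : zmodType) (C : nat -> SQ G) (n : nat) : SQ G :=
  mkSQ (fun g => num (C n) g /\ den (C n.+1) g)
       (match n with
        | 0 => den (C 0)
        | m.+1 => fun g => exists x, num (C m) x /\ den (C n) (g - x)
        end).

Definition Qc (G : zmodType) (le : G -> G -> Prop) (n : nat) : SQ G :=
  mkSQ (qker le n.+1) (qker le n).
Definition Yhc (y : Ykind) (G : zmodType) (le : G -> G -> Prop) (n : nat) : SQ G :=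
  mkSQ (Yn y le n.+1) (qker le n).
Definition Yqc (y : Ykind) (G : zmodType) (le : G -> G -> Prop) (n : nat) : SQ G :=
  mkSQ (Yn y le n.+1) (qker le n.+1).

Definition Qterm (G : zmodType) (le : G -> G -> Prop) (n : nat) : SQ G :=
  mkSQ (qker le n.+1) (qker le n).
Definition Yterm (y : Ykind) (G : zmodType) (le : G -> G -> Prop) (n : nat) : SQ G :=
  mkSQ (Yn y le n) (qker le n).
(* Q_n / Y_n  (for Y = Q this is the group 0 = Q_n/Q_n) *)
Definition QYterm (y : Ykind) (G : zmodType) (le : G -> G -> Prop) (n : nat) : SQ G :=
  mkSQ (qker le n.+1) (Yn y le n).
Definition YQterm (y : Ykind) (G : zmodType) (le : G -> G -> Prop) (n : nat) : SQ G :=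
  mkSQ (Yn y le n.+1) (qker le n.+1).

(* the long sequence  Q_0, Q_0, Yhat_0/Q_0, Q_1, Q_1/Y_1, Yhat_1/Q_1, Q_2, ... *)
Definition les_term (y : Ykind) (G : zmodType) (le : G -> G -> Prop) (i : nat) : SQ G :=
  let n := (i %/ 3)%N in
  match (i %% 3)%N with
  | 0 => Qterm le n
  | 1 => if n == 0%N then Qterm le 0 else QYterm y le n
  | _ => YQterm y le n
  end.

(* Main.v *)
Require Import Defs.
From HB Require Import structures.
From mathcomp Require Import all_boot all_algebra.
From mathcomp Require Import zify.
Import GRing.Theory.
Local Open Scope ring_scope.

Set Implicit Arguments. Unset Strict Implicit.
Section Aux.
Variable G : zmodType.

Lemma sg0 (H : G -> Prop) : subgroupP H -> H 0.
Proof. by case. Qed.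
Lemma sgB (H : G -> Prop) x y : subgroupP H -> H x -> H y -> H (x - y).
Proof. by case=> _ h; apply: h. Qed.
Lemma sgN (H : G -> Prop) x : subgroupP H -> H x -> H (- x).
Proof. move=> s hx; rewrite -sub0r; apply: sgB => //; exact: sg0. Qed.
Lemma sgD (H : G -> Prop) x y : subgroupP H -> H x -> H y -> H (x + y).
Proof. move=> s hx hy; rewrite -[y]opprK; apply: sgB => //; exact: sgN. Qed.
Lemma sgR (H : G -> Prop) g x : subgroupP H -> H x -> H (g - x) -> H g.
Proof. move=> s hx hgx; have := sgD s hgx hx; by rewrite subrK. Qed.

Lemma gen_sub (S : G -> Prop) : subgroupP (gen S).
Proof.
split; first by move=> H [h0 _] _.
move=> x y hx hy H sH hS; apply: sgB => //; [exact: hx | exact: hy].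
Qed.
Lemma gen_incl (S : G -> Prop) x : S x -> gen S x.
Proof. by move=> sx H _ hS; apply: hS. Qed.
Lemma gen_min (S H : G -> Prop) : subgroupP H -> (forall x, S x -> H x) ->
  forall x, gen S x -> H x.
Proof. by move=> sH hS x hx; apply: hx. Qed.

Variable le : G -> G -> Prop.
Hypothesis le_refl : forall x, le x x.

Lemma qker_sub n : subgroupP (qker le n).
Proof.
case: n => [|n] /=; last exact: gen_sub.
split=> // x y -> ->; by rewrite subr0.
Qed.

Lemma YK_sub y Kp : subgroupP (YK y le Kp).
Proof. case: y; exact: gen_sub. Qed.

Lemma K_Y y Kp x : Kp x -> YK y le Kp x.
Proof. by case: y => /= h; apply: gen_incl; right. Qed.

Lemma posK0 Kp : subgroupP Kp -> posK le Kp 0.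
Proof. move=> s; exists 0, 0; split=> //; split; [exact: sg0|by rewrite addr0]. Qed.

Lemma Y_Q y Kp : subgroupP Kp -> forall x, YK y le Kp x -> QK le Kp x.
Proof.
move=> sK; case: y => //=.
- rewrite /AK /QK; apply: gen_min; first exact: gen_sub.
  move=> x [ax|kx]; apply: gen_incl; last by right.
  left; split; first by case: ax.
  exists 0; split; first exact: posK0.
  by rewrite addr0 /AK; apply: gen_incl; left.
- rewrite /AAK /QK; apply: gen_min; first exact: gen_sub.
  move=> x [[px [a [_ [pa ha]]]]|kx]; apply: gen_incl; last by right.
  by left; split=> //; exists a.
Qed.

Lemma Kn_Y y n x : qker le n x -> Yn y le n x.
Proof. exact: K_Y. Qed.
Lemma Yn_K y n x : Yn y le n x -> qker le n.+1 x.
Proof. apply: Y_Q; exact: qker_sub. Qed.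
Lemma Kn_S n x : qker le n x -> qker le n.+1 x.
Proof. by move=> h; apply: gen_incl; right. Qed.
Lemma Yn_sub y n : subgroupP (Yn y le n).
Proof. exact: YK_sub. Qed.

End Aux.

Lemma les0 y (G : zmodType) (le : G -> G -> Prop) n :
  les_term y le (n * 3)%N = Qterm le n.
Proof. by rewrite /les_term mulnK // modnMl. Qed.
Lemma les1 y (G : zmodType) (le : G -> G -> Prop) n :
  les_term y le (n * 3 + 1)%N = if n == 0%N then Qterm le 0 else QYterm y le n.
Proof. by rewrite /les_term divnMDl // modnMDl /= addn0. Qed.
Lemma les2 y (G : zmodType) (le : G -> G -> Prop) n :
  les_term y le (n * 3 + 2)%N = YQterm y le n.
Proof. by rewrite /les_term divnMDl // modnMDl /= addn0. Qed.

Lemma sub_ex (G : zmodType) (H S : G -> Prop) g :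
  subgroupP H -> (forall x, H x -> S x) -> subgroupP S ->
  (S g <-> exists x, S x /\ H (g - x)).
Proof.
move=> sH HS sS; split.
- by move=> hg; exists g; rewrite subrr; split=> //; apply: sg0.
- by case=> x [sx hx]; apply: (sgR (x:=x)) => //; apply: HS.
Qed.

Lemma sub_ex2 (G : zmodType) (H S : G -> Prop) g :
  (forall x, H x -> S x) -> subgroupP S -> subgroupP H ->
  (S g <-> exists x, H x /\ S (g - x)).
Proof.
move=> HS sS sH; split.
- by move=> hg; exists 0; rewrite subr0; split=> //; apply: sg0.
- by case=> x [hx sx]; apply: (sgR (x:=x)) => //; apply: HS.
Qed.

Ltac subx := apply: sub_ex;
  [first [exact: qker_sub|exact: Yn_sub|exact: gen_sub|exact: YK_sub]| |first [exact: qker_sub|exact: Yn_sub|exact: gen_sub|exact: YK_sub]].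

Theorem corollary3p6 (G : zmodType) (le : G -> G -> Prop)
  (le_refl : forall x, le x x)
  (le_anti : forall x y, le x y -> le y x -> x = y)
  (le_trans : forall x y z, le x y -> le y z -> le x z)
  (le_add : forall x y z, le x y -> le (x + z) (y + z)) :
  (* identification of the cohomology groups *)
  (forall n : nat,
     sq_eq (cohom (Qc le) n) (Qterm le n)
     /\ (forall y, sq_eq (cohom (Yhc y le) n)
                         (if n == 0%N then Qterm le 0 else QYterm y le n))
     /\ (forall y, sq_eq (cohom (Yqc y le) n) (YQterm y le n))
     /\ (forall y, sq_eq (YQterm y le n) (Yterm y le n.+1))
     /\ ((1 <= n)%N -> forall g, num (cohom (Yhc YQ le) n) g ->
                                  den (cohom (Yhc YQ le) n) g))
  (* exactness of the three long sequences *)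
  /\ (forall y : Ykind,
        induced (zeroL G) (les_term y le 0)
        /\ exact_at (zeroL G) (les_term y le 0) (les_term y le 1)
        /\ (forall i : nat,
              induced (les_term y le i) (les_term y le i.+1)
              /\ exact_at (les_term y le i) (les_term y le i.+1)
                          (les_term y le i.+2)))
  (* consequences *)
  /\ (forall n : nat, (1 <= n)%N ->
        (forall y, y = YA \/ y = YAA ->
           induced (zeroL G) (Yterm y le n)
           /\ induced (Yterm y le n) (Qterm le n)
           /\ induced (Qterm le n) (QYterm y le n)
           /\ induced (QYterm y le n) (zeroR G)
           /\ exact_at (zeroL G) (Yterm y le n) (Qterm le n)
           /\ exact_at (Yterm y le n) (Qterm le n) (QYterm y le n)
           /\ exact_at (Qterm le n) (QYterm y le n) (zeroR G))
        /\ sq_eq (YQterm YQ le n) (Qterm le n.+1)).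
Proof.
have sK := qker_sub le.
have KY := @Kn_Y G le.
have YK := @Yn_K G le le_refl.
have KS := @Kn_S G le.
have sY := @Yn_sub G le.
split; [|split].
- move=> n; split; [|split; [|split; [|split]]].
  + split=> g /=; first by split; [case|move=> h; split].
    case: n => [|m] /=; [exact: iff_refl|symmetry; subx => //].
  + move=> y; split=> g /=.
      by case: n => [|m] /=; split; [case|move=> h; split=> //; apply: KY
                                   |case|move=> h; split=> //; apply: KY].
    case: n => [|m] /=; [exact: iff_refl|symmetry; subx => //; exact: (KY y m.+1)].
  + move=> y; split=> g /=.
      by split; [case|move=> h; split=> //; apply: (YK y n.+1)].
    case: n => [|m] /=; [exact: iff_refl|symmetry; apply: sub_ex2; [exact: (YK y m.+1)|exact: gen_sub|exact: YK_sub]].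
  + by move=> y; split.
  + case: n => [//|m] _ g /= [h1 h2]; exists g; split=> //.
    by rewrite subrr; apply: sg0; exact: gen_sub.
- move=> y.
  have e0 := les0 y le 0; have e1 := les1 y le 0.
  rewrite mul0n in e0; rewrite mul0n add0n /= in e1.
  split; [|split].
  + rewrite e0; split=> g /= ->; last by [].
    exact: (sg0 (sK 1)).
  + rewrite e0 e1 => g /= h; split.
      by move=> ->; exists 0; rewrite subr0.
    by case=> s [-> hs]; rewrite subr0 in hs.
  + move=> i; rewrite (divn_eq i 3); set n := (i %/ 3)%N.
    have : (i %% 3 < 3)%N by rewrite ltn_pmod.
    case: (i %% 3)%N => [|[|[|r]]] // _.
    * rewrite addn0.
      have -> : (n * 3).+2 = (n * 3 + 2)%N by lia.
      have -> : (n * 3).+1 = (n * 3 + 1)%N by lia.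
      rewrite les0 les1 les2; case: eqP => [->|_].
      - split; first by split.
        move=> g /= h; split=> // _; exists g; rewrite subrr; split=> //.
      - split; first by split=> // g; apply: KY.
        move=> g /= h; split=> // _; exists g; rewrite subrr; split=> //.
        exact: sg0.
    * have -> : (n * 3 + 1).+2 = (n.+1 * 3)%N by lia.
      have -> : (n * 3 + 1).+1 = (n * 3 + 2)%N by lia.
      rewrite les1 les2 les0; case: eqP => [->|_].
      - split; first by split=> g; [exact: (KY y 1 g)|exact: (KS 0 g)].
        move=> g _; exact: (sub_ex g (sK 1) (fun x h => h) (sK 1)).
      - split; first by split=> g; [exact: (KY y n.+1 g)|exact: (YK y n g)].
        move=> g _; exact: (sub_ex g (sK n.+1) (fun x h => h) (sK n.+1)).
    * have -> : (n * 3 + 2).+2 = (n.+1 * 3 + 1)%N by lia.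
      have -> : (n * 3 + 2).+1 = (n.+1 * 3)%N by lia.
      rewrite les2 les0 les1.
      split; first by split=> g; [exact: (YK y n.+1 g)|].
      move=> g _; exact: (sub_ex g (sK n.+1) (KY y n.+1) (sY y n.+1)).
- move=> n _; split; last by split.
  move=> y _.
  split; [|split; [|split; [|split; [|split; [|split]]]]].
  + by split=> g /= ->; apply: sg0.
  + by split=> g /=; [apply: YK|].
  + by split=> g /=; [|apply: KY].
  + by split.
  + move=> g /= h; split; first by move=> hg; exists 0; rewrite subr0.
    by case=> s [-> hs]; rewrite subr0 in hs.
  + move=> g /= h; subx => //; exact: KY.
  + move=> g /= h; split=> // _; exists g; rewrite subrr; split=> //.
    exact: sg0.
Qed.
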